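(* Let $A$ be a bounded linear operator on a complex Hilbert space $\mathcal{H}$, and let $W(A) = \{\langle Ax, x\rangle : x \in \mathcal{H}, \|x\| = 1\}$ be its numerical range. Then \[ \|A^*A - AA^*\| \le 2\, S(W(A)), \] where $S(W(A))$ denotes the area (planar Lebesgue measure) of $W(A) \subset \mathbb{C}$. *)

(* Defs.v *)
From HB Require Import structures.
From mathcomp Require Import all_boot all_order all_algebra.
From mathcomp Require Import all_classical all_reals all_analysis.
From mathcomp Require Import complex.
Set Implicit Arguments. Unset Strict Implicit. Unset Printing Implicit Defensive.
Import Order.TTheory GRing.Theory Num.Theory.
Local Open Scope ring_scope.
Local Open Scope classical_set_scope.
Local Open Scope complex_scope.

Section Hilbert.
Variables (R : realType) (V : lmodType R[i]) (ip : V -> V -> R[i]).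

Definition hnorm (x : V) : R := Num.sqrt (complex.Re (ip x x)).

Definition is_inner_product : Prop :=
  [/\ (forall (a : R[i]) (x1 x2 y : V), ip (a *: x1 + x2) y = a * ip x1 y + ip x2 y),
      (forall x y : V, ip y x = (ip x y)^*),
      (forall x : V, 0 <= ip x x) &
      (forall x : V, ip x x = 0 -> x = 0)].

Definition is_complete_hnorm : Prop :=
  forall u : nat -> V,
    (forall e : R, 0 < e -> exists N : nat, forall m n : nat,
        (N <= m)%N -> (N <= n)%N -> hnorm (u m - u n) < e) ->
    exists l : V, forall e : R, 0 < e -> exists N : nat, forall n : nat,
        (N <= n)%N -> hnorm (u n - l) < e.

Definition is_hilbert_space : Prop := is_inner_product /\ is_complete_hnorm.

Definition is_bounded_linear (A : V -> V) : Prop :=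
  (forall (a : R[i]) (x y : V), A (a *: x + y) = a *: A x + A y) /\
  exists M : R, forall x : V, hnorm (A x) <= M * hnorm x.

Definition is_adjoint (A Astar : V -> V) : Prop :=
  forall x y : V, ip (A x) y = ip x (Astar y).

Definition numerical_range (A : V -> V) : set R[i] :=
  [set ip (A x) x | x in [set x : V | hnorm x = 1]].

Definition op_norm (T : V -> V) : \bar R :=
  ereal_sup [set (hnorm (T x))%:E | x in [set x : V | hnorm x <= 1]].

End Hilbert.

Definition area (R : realType) (S : set R[i]) : \bar R :=
  mu_ext ((@lebesgue_measure R) \x (@lebesgue_measure R))%E
    [set (complex.Re z, complex.Im z) | z in S].

(* Main.v *)
Require Import Defs.
From HB Require Import structures.
From mathcomp Require Import all_boot all_order all_algebra.
From mathcomp Require Import all_classical all_reals all_analysis.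
From mathcomp Require Import complex.
From mathcomp Require Import measurable_realfun ring lra.
Import Order.TTheory GRing.Theory Num.Theory.
Local Open Scope ring_scope.
Local Open Scope classical_set_scope.
Section Meas.
Import numFieldNormedType.Exports.
Variable R : realType.

Definition para (x0 y0 s h k : R) : set (R * R) :=
  [set p | x0 - h <= p.1 <= x0 + h /\ y0 - k <= p.2 - s * p.1 <= y0 + k].

Lemma para_measure (x0 y0 s h k : R) : 0 <= h -> 0 <= k ->
  ((@lebesgue_measure R) \x (@lebesgue_measure R))%E (para x0 y0 s h k)
   = ((h *+ 2) * (k *+ 2))%:E.
Proof.
move=> h0 k0.
rewrite /product_measure1 /=.
transitivity (\int[@lebesgue_measure R]_x ((\1_(`[x0 - h, x0 + h]%classic) x)%:E * (k *+ 2)%:E))%E.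
  apply: eq_integral => x _; rewrite indicE /xsection /para.
  case: (boolP (x \in _)) => xin.
    rewrite mul1e.
    have -> : [set y | (x, y) \in [set p : R * R | x0 - h <= p.1 <= x0 + h /\ y0 - k <= p.2 - s * p.1 <= y0 + k]]
      = `[s * x + (y0 - k), s * x + (y0 + k)]%classic.
      move: xin; rewrite inE /= in_itv /= => xin.
      apply/seteqP; split => y.
        rewrite /= inE /= => -[_ /andP[H1 H2]]; rewrite in_itv /=; apply/andP; split; lra.
      rewrite /= in_itv /= => /andP[H1 H2]; rewrite inE /=; split => //; apply/andP; split; lra.
    rewrite lebesgue_measure_itv /= lte_fin.
    case: ifPn => H; first by rewrite -EFinD; congr EFin; lra.
    suff -> : k = 0 by rewrite mul0rn.
    move: H; rewrite -leNgt => H; lra.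
  rewrite mul0e.
  have -> : [set y | (x, y) \in [set p : R * R | x0 - h <= p.1 <= x0 + h /\ y0 - k <= p.2 - s * p.1 <= y0 + k]] = set0.
    apply/seteqP; split => y //; rewrite /= => /set_mem /= [H _].
    by move: xin => /negP; apply; apply: mem_set; rewrite /= in_itv /= H.
  by rewrite measure0.
rewrite ge0_integralZr //; last by rewrite lee_fin; lra.
rewrite integral_indic //= setIT lebesgue_measure_itv /= lte_fin.
case: ifPn => H; first by rewrite -EFinD -EFinM; congr EFin; lra.
have -> : h = 0 by move: H; rewrite -leNgt => H; lra.
by rewrite mul0rn mul0r mul0e.
by apply/measurable_EFinP; exact: measurable_indic.
Qed.


Lemma para_measurable (x0 y0 s h k : R) :
  measurable (para x0 y0 s h k : set (measurableTypeR R * measurableTypeR R)).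
Proof.
have mg : measurable_fun setT (fun p : measurableTypeR R * measurableTypeR R => p.2 - s * p.1).
  apply: measurable_funB; first exact: measurable_snd.
  apply: measurable_funM; first exact: measurable_cst.
  exact: measurable_fst.
have -> : para x0 y0 s h k = (`[x0 - h, x0 + h]%classic `*` setT) `&`
   ((fun p : measurableTypeR R * measurableTypeR R => p.2 - s * p.1) @^-1` `[y0 - k, y0 + k]%classic).
  apply/seteqP; split => p /=; rewrite /para /= !in_itv /=.
    by move=> [-> ->].
  by move=> [[-> _] ->].
apply: measurableI; first exact: measurableX.
by rewrite -[X in measurable X]setTI; apply: mg.
Qed.

Lemma para_le (S : set (R * R)) (x0 y0 s h k : R) : 0 <= h -> 0 <= k ->
  para x0 y0 s h k `<=` S ->
  (((h *+ 2) * (k *+ 2))%:E <=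
    mu_ext ((@lebesgue_measure R) \x (@lebesgue_measure R))%E S)%E.
Proof.
move=> h0 k0 PS.
rewrite -(@para_measure x0 y0 s h k h0 k0).
rewrite -(measurable_mu_extE _ (para_measurable x0 y0 s h k)).
exact: le_mu_ext.
Qed.


Lemma ell_area (S : set (R * R)) (X0 Y0 m11 m12 m21 m22 g1 g2 : R) :
  (forall n1 n2 n3 : R, n1 ^+ 2 + n2 ^+ 2 + n3 ^+ 2 = 1 ->
     S (X0 + m11 * n1 + m12 * n2 + g1 * n3, Y0 + m21 * n1 + m22 * n2 + g2 * n3)) ->
  ((`|m11 * m22 - m12 * m21| *+ 2)%:E <=
    mu_ext ((@lebesgue_measure R) \x (@lebesgue_measure R))%E S)%E.
Proof.
move=> HS.
set D := m11 * m22 - m12 * m21.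
have [D0|Dn0] := eqVneq D 0.
  by rewrite D0 normr0 mul0rn; apply: mu_ext_ge0 => //; apply: measure_ge0.
have D2pos : 0 < D ^+ 2 by rewrite lt_neqAle sqr_ge0 andbT eq_sym sqrf_eq0.
set r2 := m11 ^+ 2 + m12 ^+ 2.
have r2pos : 0 < r2.
  rewrite lt_neqAle addr_ge0 ?sqr_ge0 // andbT eq_sym.
  apply/negP => /eqP r20; move/negP: Dn0; apply; apply/eqP.
  have := sqr_ge0 m11; have := sqr_ge0 m12; move: r20; rewrite /r2 => r20 ha hb.
  have h1 : m11 = 0 by nra.
  have h2 : m12 = 0 by nra.
  by rewrite /D h1 h2; ring.
set r := Num.sqrt r2.
have rpos : 0 < r by rewrite sqrtr_gt0.
have rr : r ^+ 2 = r2 by rewrite sqr_sqrtr // ltW.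
set sg := Num.sqrt (2^-1 : R).
have sgpos : 0 < sg by rewrite sqrtr_gt0 invr_gt0.
have sgsg : sg ^+ 2 = 2^-1 by rewrite sqr_sqrtr // invr_ge0.
set sl := (m11 * m21 + m12 * m22) / r2.
set h := r * sg.
set k := `|D| * sg / r.
have h0 : 0 <= h by rewrite mulr_ge0 // ltW.
have k0 : 0 <= k by rewrite mulr_ge0 // ?invr_ge0 ?mulr_ge0 // ltW.
have -> : `|D| *+ 2 = (h *+ 2) * (k *+ 2).
  rewrite /h /k mulrnAl mulrnAr -mulrnA.
  have e : r * sg * (`|D| * sg / r) = `|D| * sg ^+ 2.
    by field; rewrite gt_eqF.
  by rewrite e sgsg; field.
have PL := (@para_le S X0 (Y0 - sl * X0) sl h k h0 k0).
apply PL => -[X Y] /=.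
rewrite /para /= => -[/andP[hx1 hx2] /andP[hy1 hy2]].
set t := (X - X0) / r.
set E := Y - Y0 - sl * (X - X0).
set s' := E * r / D.
have ht : t ^+ 2 <= 2^-1.
  rewrite -sgsg.
  have : `|X - X0| <= h by rewrite ler_norml; apply/andP; split; lra.
  move=> hh.
  have -> : t = (X - X0) / r by [].
  rewrite expr_div_n ler_pdivrMr; last by rewrite exprn_gt0.
  rewrite -[X in _ <= X]exprMn /h mulrC.
  rewrite -real_normK ?num_real //; apply: lerXn2r => //; rewrite ?nnegrE //.
have hs : s' ^+ 2 <= 2^-1.
  have hE : `|E| <= k by rewrite /E mulrBr ler_norml; apply/andP; split; lra.
  have : E ^+ 2 <= k ^+ 2.
    rewrite -real_normK ?num_real //; apply: lerXn2r => //; rewrite ?nnegrE //.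
  move=> hE2.
  have -> : s' ^+ 2 = E ^+ 2 * r2 / D ^+ 2 by rewrite /s' -rr; field.
  rewrite ler_pdivrMr //.
  have -> : 2^-1 * D ^+ 2 = k ^+ 2 * r2.
    rewrite /k -rr expr_div_n exprMn sgsg -(real_normK (num_real D)); field.
    by rewrite gt_eqF.
  by rewrite ler_pM2r.
set n1 := (- s' * m12 + t * m11) / r.
set n2 := (s' * m11 + t * m12) / r.
have hn12 : n1 ^+ 2 + n2 ^+ 2 = s' ^+ 2 + t ^+ 2.
  have -> : n1 ^+ 2 + n2 ^+ 2 = ((- s' * m12 + t * m11) ^+ 2 + (s' * m11 + t * m12) ^+ 2) / r ^+ 2.
    by rewrite /n1 /n2; field; rewrite gt_eqF.
  rewrite rr /r2; field.
  by rewrite -/r2 gt_eqF.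
set k1 := m12 * g2 - g1 * m22.
set k2 := g1 * m21 - m11 * g2.
set K2 := k1 ^+ 2 + k2 ^+ 2 + D ^+ 2.
have K2pos : 0 < K2.
  have := sqr_ge0 k1; have := sqr_ge0 k2; rewrite /K2; lra.
set b := n1 * k1 + n2 * k2.
set c0 := n1 ^+ 2 + n2 ^+ 2 - 1.
have c0le : c0 <= 0 by rewrite /c0 hn12; lra.
have disc : 0 <= b ^+ 2 - K2 * c0.
  have := sqr_ge0 b; have : 0 <= K2 * (- c0) by apply: mulr_ge0; [exact: ltW | rewrite oppr_ge0].
  rewrite mulrN; lra.
set tau := (- b + Num.sqrt (b ^+ 2 - K2 * c0)) / K2.
have htau : K2 * tau ^+ 2 + 2 * b * tau + c0 = 0.
  have sq := sqr_sqrtr disc.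
  rewrite /tau; move: sq; set q := Num.sqrt _ => sq.
  apply: (@mulfI _ K2); first by rewrite gt_eqF.
  rewrite mulr0.
  have -> : K2 * (K2 * ((- b + q) / K2) ^+ 2 + 2 * b * ((- b + q) / K2) + c0)
     = q ^+ 2 - (b ^+ 2 - K2 * c0) by field; rewrite gt_eqF.
  by rewrite sq subrr.
have := HS (n1 + tau * k1) (n2 + tau * k2) (tau * D).
have -> : X0 + m11 * (n1 + tau * k1) + m12 * (n2 + tau * k2) + g1 * (tau * D) = X.
  have e1 : m11 * n1 + m12 * n2 = X - X0.
    rewrite /n1 /n2 /t.
    have -> : m11 * ((- s' * m12 + (X - X0) / r * m11) / r) +
      m12 * ((s' * m11 + (X - X0) / r * m12) / r) = (X - X0) * r2 / r ^+ 2
      by rewrite /r2; field; rewrite gt_eqF.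
    by rewrite rr mulfK // gt_eqF.
  have e2 : m11 * k1 + m12 * k2 + g1 * D = 0 by rewrite /k1 /k2 /D; ring.
  transitivity (X0 + (m11 * n1 + m12 * n2) + tau * (m11 * k1 + m12 * k2 + g1 * D)); first by ring.
  by rewrite e1 e2; ring.
have -> : Y0 + m21 * (n1 + tau * k1) + m22 * (n2 + tau * k2) + g2 * (tau * D) = Y.
  have e1 : m21 * n1 + m22 * n2 = Y - Y0.
    have -> : m21 * n1 + m22 * n2 = (s' * D + t * (m11 * m21 + m12 * m22)) / r.
      by rewrite /n1 /n2 /D; field; rewrite gt_eqF.
    have -> : s' * D = E * r by rewrite /s'; field.
    have -> : t * (m11 * m21 + m12 * m22) = (X - X0) * sl * r.
      by rewrite /t /sl -rr; field; rewrite gt_eqF.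
    by rewrite /E; field; rewrite gt_eqF.
  have e2 : m21 * k1 + m22 * k2 + g2 * D = 0 by rewrite /k1 /k2 /D; ring.
  transitivity (Y0 + (m21 * n1 + m22 * n2) + tau * (m21 * k1 + m22 * k2 + g2 * D)); first by ring.
  by rewrite e1 e2; ring.
apply.
have -> : (n1 + tau * k1) ^+ 2 + (n2 + tau * k2) ^+ 2 + (tau * D) ^+ 2
   = K2 * tau ^+ 2 + 2 * b * tau + c0 + 1 by rewrite /K2 /b /c0; ring.
by rewrite htau add0r.
Qed.

End Meas.

Section H.
Local Open Scope complex_scope.
Variables (R : realType) (V : lmodType R[i]) (ip : V -> V -> R[i]).
Hypothesis ipDl : forall (a : R[i]) (x1 x2 y : V), ip (a *: x1 + x2) y = a * ip x1 y + ip x2 y.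
Hypothesis ipC : forall x y : V, ip y x = (ip x y)^*.
Hypothesis ipge0 : forall x : V, 0 <= ip x x.
Hypothesis ipdef : forall x : V, ip x x = 0 -> x = 0.

Lemma ip0l y : ip 0 y = 0.
Proof.
have := ipDl 1 0 0 y; rewrite scale1r addr0 mul1r => h.
by have := congr1 (fun t => t - ip 0 y) h; rewrite subrr addrK => <-.
Qed.

Lemma ipDl' x y z : ip (x + y) z = ip x z + ip y z.
Proof. by rewrite -[x]scale1r ipDl mul1r scale1r. Qed.

Lemma ipZl a x y : ip (a *: x) y = a * ip x y.
Proof. by rewrite -[a *: x]addr0 ipDl ip0l addr0. Qed.

Lemma ipNl x y : ip (- x) y = - ip x y.
Proof. by rewrite -scaleN1r ipZl mulN1r. Qed.

Lemma ipBl x y z : ip (x - y) z = ip x z - ip y z.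
Proof. by rewrite ipDl' ipNl. Qed.

Lemma ip0r y : ip y 0 = 0.
Proof. by rewrite ipC ip0l conjc0. Qed.

Lemma ipDr x y z : ip z (x + y) = ip z x + ip z y.
Proof. by rewrite ipC ipDl' rmorphD (ipC x z) (ipC y z). Qed.

Lemma ipZr a x y : ip x (a *: y) = a^* * ip x y.
Proof. by rewrite ipC ipZl rmorphM (ipC y x). Qed.

Lemma ipNr x y : ip y (- x) = - ip y x.
Proof. by rewrite ipC ipNl rmorphN (ipC x y). Qed.

Lemma ipBr x y z : ip z (x - y) = ip z x - ip z y.
Proof. by rewrite ipDr ipNr. Qed.

Lemma ipxx_real x : ip x x = (complex.Re (ip x x))%:C.
Proof.
move: (ipge0 x); rewrite lecE; case: (ip x x) => a b /= /andP[/eqP h _].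
by rewrite h.
Qed.


Lemma ip_comb (al be : R[i]) u v x e :
  ip (al *: u + be *: v) (al *: x + be *: e) =
  al * al^* * ip u x + al * be^* * ip u e + be * al^* * ip v x + be * be^* * ip v e.
Proof. rewrite !ipDl' !ipZl !ipDr !ipZr; ring. Qed.

Variable A : V -> V.
Hypothesis hA : forall (a : R[i]) (x y : V), A (a *: x + y) = a *: A x + A y.

Lemma A0 : A 0 = 0.
Proof.
have := hA 1 0 0; rewrite !scale1r addr0 => h.
by have := congr1 (fun t => t - A 0) h; rewrite subrr addrK => <-.
Qed.

Lemma A2 (al be : R[i]) x e : A (al *: x + be *: e) = al *: A x + be *: A e.
Proof. by rewrite hA -[be *: e]addr0 hA A0 addr0. Qed.

Lemma sphere_pt (x e : V) (n1 n2 n3 : R) (a d p q : R[i]) :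
  ip x x = 1 -> ip e e = 1 -> ip x e = 0 -> n1 ^+ 2 + n2 ^+ 2 + n3 ^+ 2 = 1 ->
  ip (A x) x = a -> ip (A e) e = d -> ip (A e) x = p -> ip (A x) e = q ->
  exists z, ip z z = 1 /\
  (complex.Re (ip (A z) z) =
    (complex.Re a + complex.Re d) / 2 + (complex.Re p + complex.Re q) / 2 * n1
    + (complex.Im q - complex.Im p) / 2 * n2 + (complex.Re a - complex.Re d) / 2 * n3) /\
  (complex.Im (ip (A z) z) =
    (complex.Im a + complex.Im d) / 2 + (complex.Im p + complex.Im q) / 2 * n1
    + (complex.Re p - complex.Re q) / 2 * n2 + (complex.Im a - complex.Im d) / 2 * n3).
Proof.
move=> xx ee xe hn ha hd hp hq.
have ex : ip e x = 0 by rewrite ipC xe conjc0.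
have [n3e|n3ne] := eqVneq (1 + n3) 0.
  have n3m : n3 = -1 by lra.
  have n1z : n1 = 0 by nra.
  have n2z : n2 = 0 by nra.
  exists e; split => //; rewrite hd n1z n2z n3m.
  by split; field.
have cpos : 0 < (1 + n3) / 2.
  have : n3 <= 1 by nra.
  have : -1 <= n3 by nra.
  move=> h1 h2; rewrite divr_gt0 //; rewrite lt_neqAle eq_sym n3ne /=; lra.
set c := (1 + n3) / 2.
set al := Num.sqrt c.
have alpos : 0 < al by rewrite sqrtr_gt0.
have alal : al ^+ 2 = c by rewrite sqr_sqrtr // ltW.
set b1 := n1 / (2 * al).
set b2 := n2 / (2 * al).
have e1 : n1 = 2 * al * b1 by rewrite /b1; field; rewrite gt_eqF.
have e2 : n2 = 2 * al * b2 by rewrite /b2; field; rewrite gt_eqF.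
have e3 : n3 = 2 * al ^+ 2 - 1 by rewrite alal /c; field.
have bb : b1 ^+ 2 + b2 ^+ 2 = 1 - al ^+ 2.
  have : (2 * al) ^+ 2 * (b1 ^+ 2 + b2 ^+ 2) = (2 * al) ^+ 2 * (1 - al ^+ 2).
    rewrite mulrDr -!exprMn -e1 -e2.
    have : n1 ^+ 2 + n2 ^+ 2 = 1 - n3 ^+ 2 by lra.
    move=> ->; rewrite e3; ring.
  by move/mulfI; apply; rewrite sqrf_eq0 mulf_neq0 // gt_eqF.
exists ((al +i* 0) *: x + (b1 +i* b2) *: e); split.
  rewrite ip_comb xx ee xe ex.
  simpc.
  apply/eqP; rewrite eq_complex /=; apply/andP; split; apply/eqP.
    by move: bb; rewrite !expr2; lra.
  by rewrite mulrC addNr.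
rewrite A2 ip_comb ha hd hp hq; clear ha hd hp hq.
move: a d p q => [a1 a2] [d1 d2] [p1 p2] [q1 q2].
simpc; rewrite /= e1 e2 e3.
have bb' : b1 * b1 + b2 * b2 = 1 - al * al by move: bb; rewrite !expr2.
have z0 : - (b1 * b2) + b2 * b1 = 0 by rewrite mulrC addNr.
rewrite bb' z0.
by split; field.
Qed.

Lemma area_bound (x e : V) : ip x x = 1 -> ip e e = 1 -> ip x e = 0 ->
  ((`| (complex.Re (ip (A e) x) ^+ 2 + complex.Im (ip (A e) x) ^+ 2)
      - (complex.Re (ip (A x) e) ^+ 2 + complex.Im (ip (A x) e) ^+ 2) |)%:E
   <= 2%:E * area (numerical_range ip A))%E.
Proof.
move=> xx ee xe.
set a := ip (A x) x; set d := ip (A e) e; set p := ip (A e) x; set q := ip (A x) e.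
set S := [set (complex.Re z, complex.Im z) | z in numerical_range ip A].
have := @ell_area R S
  ((complex.Re a + complex.Re d) / 2) ((complex.Im a + complex.Im d) / 2)
  ((complex.Re p + complex.Re q) / 2) ((complex.Im q - complex.Im p) / 2)
  ((complex.Im p + complex.Im q) / 2) ((complex.Re p - complex.Re q) / 2)
  ((complex.Re a - complex.Re d) / 2) ((complex.Im a - complex.Im d) / 2).
move=> H.
have -> : `| complex.Re p ^+ 2 + complex.Im p ^+ 2 - (complex.Re q ^+ 2 + complex.Im q ^+ 2)|
  = 2 * (`|(complex.Re p + complex.Re q) / 2 * ((complex.Re p - complex.Re q) / 2) -
       (complex.Im q - complex.Im p) / 2 * ((complex.Im p + complex.Im q) / 2)| *+ 2).
  set P := complex.Re p ^+ 2 + complex.Im p ^+ 2 - (complex.Re q ^+ 2 + complex.Im q ^+ 2).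
  have -> : (complex.Re p + complex.Re q) / 2 * ((complex.Re p - complex.Re q) / 2) -
       (complex.Im q - complex.Im p) / 2 * ((complex.Im p + complex.Im q) / 2) = P * 4^-1.
    by rewrite /P; field.
  rewrite normrM [`|4^-1|]ger0_norm ?invr_ge0 // -mulr_natr.
  by field.
rewrite EFinM.
apply: lee_wpmul2l => //; apply: H.
move=> n1 n2 n3 hn.
have [z [zz [hre him]]] := sphere_pt x e n1 n2 n3 a d p q xx ee xe hn erefl erefl erefl erefl.
exists (ip (A z) z); last by rewrite hre him.
exists z => //=.
by rewrite /hnorm zz /= sqrtr1.
Qed.

Definition nsq (z : V) : R := complex.Re (ip z z).

Lemma nsq_ge0 z : 0 <= nsq z.
Proof. by move: (ipge0 z); rewrite lecE => /andP[]. Qed.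

Lemma nsq0 z : nsq z = 0 -> z = 0.
Proof. by move=> h; apply: ipdef; rewrite ipxx_real -/(nsq z) h. Qed.

Lemma nsqZ (l : R) z : nsq ((l%:C) *: z) = l ^+ 2 * nsq z.
Proof.
rewrite /nsq ipZl ipZr ipxx_real -!complexr0; simpc; rewrite /=.
by rewrite expr2; ring.
Qed.

Lemma bessel (v e : V) : ip e e = 1 ->
  complex.Re (ip v e) ^+ 2 + complex.Im (ip v e) ^+ 2 <= nsq v.
Proof.
move=> ee.
have h := nsq_ge0 (v - ip v e *: e).
rewrite /nsq !ipBl !ipBr !ipZl !ipZr ee (ipC v e) in h.
move: h; rewrite /nsq; case: (ip v e) => c1 c2; case: (ip v v) => w1 w2 /=.
simpc => /=; rewrite !expr2; lra.
Qed.

Variable Astar : V -> V.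
Hypothesis hadj : forall x y : V, ip (A x) y = ip x (Astar y).

Lemma hAs (a : R[i]) (x y : V) : Astar (a *: x + y) = a *: Astar x + Astar y.
Proof.
apply/eqP; rewrite -subr_eq0; apply/eqP; apply: ipdef.
set w := _ - _.
rewrite {2}/w !ipBr ipDr ipZr -!hadj ipDr ipZr.
by rewrite subrr.
Qed.

Lemma As0 : Astar 0 = 0.
Proof.
have := hAs 1 0 0; rewrite !scale1r addr0 => h.
by have := congr1 (fun t => t - Astar 0) h; rewrite subrr addrK => <-.
Qed.

Lemma AsZ (l : R[i]) z : Astar (l *: z) = l *: Astar z.
Proof. by rewrite -[l *: z]addr0 hAs As0 addr0. Qed.

Lemma AZ (l : R[i]) z : A (l *: z) = l *: A z.
Proof. by rewrite -[l *: z]addr0 hA A0 addr0. Qed.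

Lemma AD x y : A (x + y) = A x + A y.
Proof. by rewrite -{1}[x]scale1r hA scale1r. Qed.

Lemma AsD x y : Astar (x + y) = Astar x + Astar y.
Proof. by rewrite -{1}[x]scale1r hAs scale1r. Qed.

Lemma AN x : A (- x) = - A x.
Proof. by rewrite -scaleN1r AZ scaleN1r. Qed.

Lemma AsN x : Astar (- x) = - Astar x.
Proof. by rewrite -scaleN1r AsZ scaleN1r. Qed.

Lemma AB x y : A (x - y) = A x - A y.
Proof. by rewrite -scaleN1r AD AZ scaleN1r. Qed.

Lemma AsB x y : Astar (x - y) = Astar x - Astar y.
Proof. by rewrite -scaleN1r AsD AsZ scaleN1r. Qed.

Lemma normalize (w : V) : 0 < nsq w -> exists e,
  [/\ ip e e = 1, ip w e = (Num.sqrt (nsq w))%:C, ip e w = (Num.sqrt (nsq w))%:C &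
     forall y, ip y w = 0 -> ip y e = 0].
Proof.
move=> hw.
set N := Num.sqrt (nsq w).
have Npos : 0 < N by rewrite sqrtr_gt0.
have NN : N ^+ 2 = nsq w by rewrite sqr_sqrtr // ltW.
exists ((N^-1)%:C *: w); split.
- rewrite ipZl ipZr ipxx_real -/(nsq w) -NN -!complexr0; simpc; rewrite /=.
  by apply/eqP; rewrite eq_complex /= eqxx andbT; apply/eqP; field; rewrite gt_eqF.
- rewrite ipZr ipxx_real -/(nsq w) -NN -!complexr0; simpc; rewrite /=.
  by apply/eqP; rewrite eq_complex /= eqxx andbT; apply/eqP; field; rewrite gt_eqF.
- rewrite ipZl ipxx_real -/(nsq w) -NN -!complexr0; simpc; rewrite /=.
  by apply/eqP; rewrite eq_complex /= eqxx andbT; apply/eqP; field; rewrite gt_eqF.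
- by move=> y hy; rewrite ipZr hy mulr0.
Qed.

Lemma area_ge0 : (0 <= area (numerical_range ip A))%E.
Proof. by apply: mu_ext_ge0 => // X; apply: measure_ge0. Qed.

Lemma unit_bound x : ip x x = 1 ->
  ((`|nsq (A x) - nsq (Astar x)|)%:E <= 2%:E * area (numerical_range ip A))%E.
Proof.
move=> xx.
set a := ip (A x) x.
set u := A x - a *: x.
set v := Astar x - a^* *: x.
have hxA : ip x (A x) = a^* by rewrite ipC.
have hAsx : ip (Astar x) x = a^* by rewrite ipC -hadj.
have hxAs : ip x (Astar x) = a by rewrite -hadj.
have hux : ip u x = 0 by rewrite /u ipBl ipZl xx mulr1 subrr.
have hvx : ip v x = 0 by rewrite /v ipBl ipZl xx mulr1 hAsx subrr.
have hxu : ip x u = 0 by rewrite ipC hux conjc0.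
have hxv : ip x v = 0 by rewrite ipC hvx conjc0.
have Axe : A x = u + a *: x by rewrite /u subrK.
have Asxe : Astar x = v + a^* *: x by rewrite /v subrK.
have hdiff : nsq (A x) - nsq (Astar x) = nsq u - nsq v.
  rewrite /nsq -!raddfB /=; congr complex.Re.
  rewrite /u /v !ipBl !ipBr !ipZl !ipZr hxA hAsx hxAs xx.
  rewrite -/a.
  generalize (ip (A x) (A x)) (ip (Astar x) (Astar x)) a => P Q b.
  case: b P Q => b1 b2 [p1 p2] [q1 q2]; simpc.
  by apply/eqP; rewrite eq_complex /=; apply/andP; split; apply/eqP; ring.
rewrite hdiff.
have [huv|huv] := leP (nsq v) (nsq u).
  have [u0|upos] := eqVneq (nsq u) 0.
    have v0 : nsq v = 0 by apply/le_anti; rewrite nsq_ge0 -u0 huv.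
    by rewrite u0 v0 subrr normr0 mule_ge0 // area_ge0.
  have upos' : 0 < nsq u by rewrite lt_neqAle eq_sym upos nsq_ge0.
  have [e [ee hue heu he]] := normalize _ upos'.
  have xe : ip x e = 0 by apply: he.
  have ex : ip e x = 0 by rewrite ipC xe conjc0.
  have hq : ip (A x) e = (Num.sqrt (nsq u))%:C by rewrite Axe ipDl' ipZl xe mulr0 addr0.
  have hp : ip (A e) x = (ip v e)^* by rewrite hadj Asxe ipDr ipZr ex mulr0 addr0 ipC.
  have := area_bound x e xx ee xe; rewrite hq hp.
  apply: le_trans; rewrite lee_fin.
  have := bessel v e ee.
  have NN : Num.sqrt (nsq u) ^+ 2 = nsq u by rewrite sqr_sqrtr // nsq_ge0.
  case: (ip v e) => c1 c2 /=.
  rewrite expr0n /= addr0 NN sqrrN => hb.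
  rewrite ger0_norm; last by lra.
  by rewrite ler_normr; apply/orP; right; lra.
have upos' : 0 < nsq v by apply: le_lt_trans huv; apply: nsq_ge0.
have [e [ee hve hev he]] := normalize _ upos'.
have xe : ip x e = 0 by apply: he.
have ex : ip e x = 0 by rewrite ipC xe conjc0.
have hq : ip (A x) e = ip u e by rewrite Axe ipDl' ipZl xe mulr0 addr0.
have hp : ip (A e) x = (Num.sqrt (nsq v))%:C by rewrite hadj Asxe ipDr ipZr ex mulr0 addr0.
have := area_bound x e xx ee xe; rewrite hq hp.
apply: le_trans; rewrite lee_fin.
have := bessel u e ee.
have NN : Num.sqrt (nsq v) ^+ 2 = nsq v by rewrite sqr_sqrtr // nsq_ge0.
case: (ip u e) => c1 c2 /=.
rewrite expr0n /= addr0 NN => hb.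
rewrite ltr0_norm; last by lra.
by rewrite ler_normr; apply/orP; left; lra.
Qed.

Lemma ReZr (l : R) (c : R[i]) : complex.Re ((l%:C)^* * c) = l * complex.Re c.
Proof. by case: c => c1 c2; rewrite -complexr0; simpc. Qed.

Lemma ReJ (c : R[i]) : complex.Re (c^*) = complex.Re c.
Proof. by case: c. Qed.

Lemma ReD (c d : R[i]) : complex.Re (c + d) = complex.Re c + complex.Re d.
Proof. by case: c; case: d. Qed.

Lemma ReB (c d : R[i]) : complex.Re (c - d) = complex.Re c - complex.Re d.
Proof. by case: c; case: d. Qed.

Lemma nsq_par x y : nsq (x + y) + nsq (x - y) = 2 * nsq x + 2 * nsq y.
Proof.
rewrite /nsq -ReD.
have -> : ip (x + y) (x + y) + ip (x - y) (x - y) = (ip x x + ip y y) *+ 2.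
  by rewrite !ipDl' !ipNl !ipDr !ipNr; rewrite mulr2n; ring.
by rewrite mulr2n ReD ReD; ring.
Qed.

Definition Qf (x y : V) := ip (A x) (A y) - ip (Astar x) (Astar y).

Lemma QfC x y : Qf y x = (Qf x y)^*.
Proof. by rewrite /Qf rmorphB (ipC (A x) (A y)) (ipC (Astar x) (Astar y)). Qed.

Lemma Qf_pol x y : complex.Re (Qf (x + y) (x + y)) - complex.Re (Qf (x - y) (x - y))
   = 4 * complex.Re (Qf x y).
Proof.
rewrite -ReB.
have -> : Qf (x + y) (x + y) - Qf (x - y) (x - y) = (Qf x y + Qf y x) *+ 2.
  rewrite /Qf !AD !AsD !AN !AsN !ipDl' !ipNl !ipDr !ipNr mulr2n; ring.
rewrite (QfC x y); case: (Qf x y) => c1 c2; rewrite mulr2n; simpc; rewrite /=; ring.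
Qed.

Lemma ReQf_diag z : complex.Re (Qf z z) = nsq (A z) - nsq (Astar z).
Proof. by rewrite /Qf ReB. Qed.

Lemma ip_T x y : ip (Astar (A x) - A (Astar x)) y = Qf x y.
Proof. by rewrite ipBl /Qf hadj ipC -hadj -ipC. Qed.

Lemma unitize (z : V) : 0 < nsq z ->
  ip ((Num.sqrt (nsq z))^-1%:C *: z) ((Num.sqrt (nsq z))^-1%:C *: z) = 1.
Proof.
move=> hz; set N := Num.sqrt (nsq z).
have Npos : 0 < N by rewrite sqrtr_gt0.
have NN : N ^+ 2 = nsq z by rewrite sqr_sqrtr // ltW.
rewrite ipZl ipZr ipxx_real -/(nsq z) -NN -!complexr0; simpc; rewrite /=.
by apply/eqP; rewrite eq_complex /= eqxx andbT; apply/eqP; field; rewrite gt_eqF.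
Qed.

Lemma quad_bound (K : R) : 0 <= K ->
  (forall x, ip x x = 1 -> `|nsq (A x) - nsq (Astar x)| <= K) ->
  forall z, `|nsq (A z) - nsq (Astar z)| <= K * nsq z.
Proof.
move=> K0 hK z.
have [z0|zn0] := eqVneq (nsq z) 0.
  have -> : z = 0 by apply: nsq0.
  by rewrite A0 As0 subrr normr0 /nsq ip0l /= mulr0.
have zpos : 0 < nsq z by rewrite lt_neqAle eq_sym zn0 nsq_ge0.
have := hK _ (unitize z zpos).
set N := Num.sqrt (nsq z).
have Npos : 0 < N by rewrite sqrtr_gt0.
have NN : N ^+ 2 = nsq z by rewrite sqr_sqrtr // ltW.
rewrite AZ AsZ !nsqZ -mulrBr normrM ger0_norm ?sqr_ge0 // => h.
rewrite -NN.
set d := `|_|.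
have -> : d = (N^-1 ^+ 2 * d) * N ^+ 2 by field; rewrite gt_eqF.
by rewrite ler_pM2r // exprn_gt0.
Qed.

Lemma T_bound (K : R) : 0 <= K ->
  (forall z, `|nsq (A z) - nsq (Astar z)| <= K * nsq z) ->
  forall x, nsq x <= 1 -> hnorm ip (Astar (A x) - A (Astar x)) <= K.
Proof.
move=> K0 hK x hx.
set w := Astar (A x) - A (Astar x).
have hw : nsq w = complex.Re (Qf x w) by rewrite /nsq ip_T.
rewrite /hnorm -/(nsq w).
have [w0|wn0] := eqVneq (nsq w) 0.
  by rewrite w0 sqrtr0.
have wpos : 0 < nsq w by rewrite lt_neqAle eq_sym wn0 nsq_ge0.
set N := Num.sqrt (nsq w).
have Npos : 0 < N by rewrite sqrtr_gt0.
have NN : N ^+ 2 = nsq w by rewrite sqr_sqrtr // ltW.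
set y := (N^-1)%:C *: w.
have yy : nsq y = 1.
  rewrite /y nsqZ -NN; field; rewrite gt_eqF //.
have hQ : complex.Re (Qf x y) = N.
  rewrite /Qf /y AZ AsZ !ipZr -mulrBr ReZr -/(Qf x w) -hw -NN.
  by field; rewrite gt_eqF.
have hpol := Qf_pol x y.
rewrite hQ !ReQf_diag in hpol.
have h1 := hK (x + y).
have h2 := hK (x - y).
have hp := nsq_par x y.
move: h1 h2; rewrite !ler_norml => /andP[h1a h1b] /andP[h2a h2b].
have hKx : K * nsq x <= K by rewrite -[X in _ <= X]mulr1 ler_wpM2l.
have e1 : K * nsq (x + y) + K * nsq (x - y) = 2 * (K * nsq x) + 2 * K.
  by rewrite -mulrDr hp yy; ring.
lra.
Qed.

End H.

Theorem proposition4 (R : realType) (V : lmodType R[i]) (ip : V -> V -> R[i])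
    (A Astar : V -> V) :
  is_hilbert_space ip ->
  is_bounded_linear ip A ->
  is_adjoint ip A Astar ->
  (op_norm ip (fun x => (Astar (A x) - A (Astar x))%R)
     <= 2%:E * area (numerical_range ip A))%E.
Proof.
move=> [[ipDl ipC ipge0 ipdef] _] [hA _] hadj.
have ar0 := area_ge0 R V ip A.
have hU := unit_bound R V ip ipDl ipC ipge0 A hA Astar hadj.
move: hU ar0; case: (area (numerical_range ip A)) => [r| |] hU ar0; last first.
- by rewrite leeNy_eq in ar0.
- by rewrite mulry gtr0_sg // mul1e leey.
rewrite lee_fin in ar0.
have K0 : 0 <= 2 * r by rewrite mulr_ge0.
apply: ge_ereal_sup => _ [x /= hx <-]; rewrite lee_fin.
apply: (T_bound R V ip ipDl ipC ipge0 ipdef A hA Astar hadj _ K0); last first.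
  by move: hx; rewrite /hnorm -[X in _ <= X]sqrtr1 ler_sqrt.
apply: (quad_bound R V ip ipDl ipC ipge0 ipdef A hA Astar hadj _ K0) => z hz.
by have := hU z hz; rewrite -EFinM lee_fin.
Qed.
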